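(* Let $\mathcal D$ be universal, $\mathrm H=(H,d)\in\mathfrak U_{\mathcal D}$, and let $\mathfrak t$ be a Katětov function of $\mathrm H$ with nonempty domain. Let $\mathcal D_{\mathfrak t}=\{n\in\mathcal D: n\le 2\operatorname{rank}(\mathfrak t)\}$. Then $\mathcal D_{\mathfrak t}$ is universal and the subspace of $\mathrm H$ on $\operatorname{orb}(\mathfrak t)$ is isometric to $\mathbf U_{\mathcal D_{\mathfrak t}}$; in particular $\operatorname{orb}(\mathfrak t)$ is infinite.
   Context: $\mathcal D$ is a finite subset of $\mathbb R_{\ge0}$ containing $0$. $\mathfrak U_{\mathcal D}$ is the class of countable homogeneous metric spaces (every isometry between finite subspaces extends to an isometry of the space onto itself) with distance set exactly $\mathcal D$ into which every finite metric space with distances in $\mathcal D$ embeds isometrically; these are all isometric, $\mathbf U_{\mathcal D}$ denotes one of them, and $\mathcal D$ is universal if the class is nonempty. For a metric space $(M,d)$ with distances in $\mathcal D$, a Katětov function is a map $\mathfrak t:F\to\mathcal D\setminus\{0\}$, $F\subseteq M$ finite, with $|\mathfrak t(x)-\mathfrak t(y)|\le d(x,y)\le\mathfrak t(x)+\mathfrak t(y)$ for all $x,y\in F$. Its orbit is $\operatorname{orb}(\mathfrak t)=\{y\in M\setminus F: d(y,x)=\mathfrak t(x)\text{ for all }x\in F\}$ and its rank is $\operatorname{rank}(\mathfrak t)=\min_{x\in F}\mathfrak t(x)$. *)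

(* Defs.v *)
From Stdlib Require Import Reals List.
Import ListNotations.
Open Scope R_scope.

Definition is_metric (M : Type) (d : M -> M -> R) : Prop :=
  (forall x y, 0 <= d x y) /\
  (forall x y, d x y = 0 <-> x = y) /\
  (forall x y, d x y = d y x) /\
  (forall x y z, d x z <= d x y + d y z).

Definition countable (M : Type) : Prop :=
  exists f : M -> nat, forall x y, f x = f y -> x = y.

Definition distance_set_eq (D : list R) (M : Type) (d : M -> M -> R) : Prop :=
  (forall x y, In (d x y) D) /\ (forall r, In r D -> exists x y, d x y = r).

(* Every isometry between finite subspaces extends to a surjective isometry.
   A finite subspace is given by a list A; the partial isometry is g restricted to A. *)
Definition homogeneous (M : Type) (d : M -> M -> R) : Prop :=
  forall (A : list M) (g : M -> M),
    (forall x y, In x A -> In y A -> d (g x) (g y) = d x y) ->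
    exists h : M -> M,
      (forall x y, d (h x) (h y) = d x y) /\
      (forall y, exists x, h x = y) /\
      (forall x, In x A -> h x = g x).

Definition D_universal_space (D : list R) (M : Type) (d : M -> M -> R) : Prop :=
  forall (F : Type) (dF : F -> F -> R),
    is_metric F dF ->
    (exists l : list F, forall x, In x l) ->
    (forall x y, In (dF x y) D) ->
    exists f : F -> M, forall x y, d (f x) (f y) = dF x y.

Definition in_U (D : list R) (M : Type) (d : M -> M -> R) : Prop :=
  is_metric M d /\ countable M /\ homogeneous M d /\
  distance_set_eq D M d /\ D_universal_space D M d.

Definition universal (D : list R) : Prop :=
  exists (M : Type) (d : M -> M -> R), in_U D M d.

Definition katetov (D : list R) (M : Type) (d : M -> M -> R)
    (F : list M) (t : M -> R) : Prop :=
  (forall x, In x F -> In (t x) D /\ t x <> 0) /\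
  (forall x y, In x F -> In y F ->
     Rabs (t x - t y) <= d x y /\ d x y <= t x + t y).

Definition orb (M : Type) (d : M -> M -> R) (F : list M) (t : M -> R) (y : M) : Prop :=
  ~ In y F /\ forall x, In x F -> d y x = t x.

Definition rank (M : Type) (F : list M) (t : M -> R) : R :=
  match F with
  | [] => 0
  | x :: xs => fold_right (fun y acc => Rmin (t y) acc) (t x) xs
  end.

Definition D_restrict (D : list R) (r : R) : list R :=
  filter (fun n => if Rle_dec n (2 * r) then true else false) D.

Definition isometric (M : Type) (d : M -> M -> R) (N : Type) (e : N -> N -> R) : Prop :=
  exists f : M -> N,
    (forall x y, e (f x) (f y) = d x y) /\ (forall z, exists x, f x = z).

(* Main.v *)
Require Import Defs.
From Stdlib Require Import Reals List Lra Lia Classical ClassicalEpsilon ProofIrrelevance.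
Import ListNotations.
Open Scope R_scope.

Lemma sig_ext {A : Type} {P : A -> Prop} (a b : {x | P x}) :
  proj1_sig a = proj1_sig b -> a = b.
Proof. destruct a as [x px], b as [y py]; simpl; intros ->. f_equal. apply proof_irrelevance. Qed.

Lemma sig_enum_aux {U : Type} (L : list U) : forall L', incl L' L ->
  exists l : list {x | In x L}, forall x (p : In x L), In x L' -> In (exist _ x p) l.
Proof.
  induction L' as [|a L' IH]; intros Hi.
  - exists nil. intros x p [].
  - assert (Ha : In a L) by (apply Hi; left; reflexivity).
    destruct IH as [l Hl]. { intros z Hz. apply Hi. right. exact Hz. }
    exists (exist _ a Ha :: l). intros x p [Heq|Hx].
    + subst x. left. rewrite (proof_irrelevance _ p Ha). reflexivity.
    + right. apply Hl. exact Hx.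
Qed.

Lemma sig_enum {U : Type} (L : list U) : exists l : list {x | In x L}, forall s, In s l.
Proof. destruct (sig_enum_aux L L (incl_refl L)) as [l Hl]. exists l. intros [x p]. apply Hl. exact p. Qed.

Definition metric_on {U : Type} (dU : U -> U -> R) (L : list U) : Prop :=
  forall x y z, In x L -> In y L -> In z L ->
    0 <= dU x y /\ (dU x y = 0 <-> x = y) /\ dU x y = dU y x /\ dU x z <= dU x y + dU y z.

Lemma univ_list {U V : Type} (dU : U -> U -> R) (dV : V -> V -> R) (D' : list R) (v0 : V)
  (HV : D_universal_space D' V dV) (L : list U)
  (Hm : metric_on dU L) (Hd : forall x y, In x L -> In y L -> In (dU x y) D') :
  exists f : U -> V, forall x y, In x L -> In y L -> dV (f x) (f y) = dU x y.
Proof.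
  pose (dS := fun a b : {x | In x L} => dU (proj1_sig a) (proj1_sig b)).
  assert (HmS : is_metric {x | In x L} dS).
  { unfold is_metric, dS. split; [|split; [|split]].
    - intros [x px] [y py]; simpl. apply (Hm x y x px py px).
    - intros [x px] [y py]; simpl. split.
      + intros H0. apply sig_ext. simpl. apply (Hm x y x px py px). exact H0.
      + intros H0. apply (f_equal (@proj1_sig _ _)) in H0. simpl in H0. subst y.
        apply (Hm x x x px px px). reflexivity.
    - intros [x px] [y py]; simpl. apply (Hm x y x px py px).
    - intros [x px] [y py] [z pz]; simpl. apply (Hm x y z px py pz). }
  destruct (sig_enum L) as [l Hl].
  assert (HdS : forall a b, In (dS a b) D').
  { intros [x px] [y py]; unfold dS; simpl. apply Hd; assumption. }
  destruct (HV _ dS HmS (ex_intro _ l Hl) HdS) as [e He].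
  exists (fun x => match excluded_middle_informative (In x L) with
                   | left p => e (exist _ x p) | right _ => v0 end).
  intros x y Hx Hy. cbv beta.
  destruct (excluded_middle_informative (In x L)) as [px|n]; [|contradiction].
  destruct (excluded_middle_informative (In y L)) as [py|n]; [|contradiction].
  rewrite He. reflexivity.
Qed.

Lemma ext_list {U V : Type} (dU : U -> U -> R) (dV : V -> V -> R) (D' : list R) (v0 : V)
  (HV : in_U D' V dV) (A B : list U) (phi : U -> V)
  (Hphi : forall a a', In a A -> In a' A -> dV (phi a) (phi a') = dU a a')
  (Hm : metric_on dU (A ++ B))
  (Hd : forall x y, In x (A ++ B) -> In y (A ++ B) -> In (dU x y) D') :
  exists psi : U -> V,
    (forall x y, In x (A ++ B) -> In y (A ++ B) -> dV (psi x) (psi y) = dU x y)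
    /\ (forall a, In a A -> psi a = phi a).
Proof.
  destruct HV as [[HV1 [HV2 [HV3 HV4]]] [_ [Hhom [_ Huniv]]]].
  destruct (univ_list dU dV D' v0 Huniv (A ++ B) Hm Hd) as [f Hf].
  pose (g := fun y : V => match excluded_middle_informative (exists a, In a A /\ f a = y) with
     | left H => phi (proj1_sig (constructive_indefinite_description _ H)) | right _ => y end).
  assert (Hg : forall a, In a A -> g (f a) = phi a).
  { intros a Ha. unfold g.
    destruct (excluded_middle_informative (exists a0, In a0 A /\ f a0 = f a)) as [H|H].
    - destruct (constructive_indefinite_description _ H) as [a' [Ha' Heq]]. simpl.
      assert (Hin' : In a' (A ++ B)) by (apply in_or_app; left; exact Ha').
      assert (Hin : In a (A ++ B)) by (apply in_or_app; left; exact Ha).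
      assert (E : a' = a).
      { apply (Hm a' a a' Hin' Hin Hin'). rewrite <- (Hf a' a Hin' Hin). rewrite Heq.
        apply HV2. reflexivity. }
      subst; reflexivity.
    - exfalso; apply H; exists a; auto. }
  destruct (Hhom (map f A) g) as [h [Hh1 [Hh2 Hh3]]].
  { intros y y' Hy Hy'. apply in_map_iff in Hy as [a [<- Ha]].
    apply in_map_iff in Hy' as [a' [<- Ha']].
    rewrite (Hg a Ha), (Hg a' Ha'), (Hphi a a' Ha Ha').
    symmetry; apply Hf; apply in_or_app; left; assumption. }
  exists (fun x => h (f x)). split.
  - intros x y Hx Hy. rewrite Hh1. apply Hf; auto.
  - intros a Ha. rewrite Hh3 by (apply in_map; auto). apply Hg; auto.
Qed.

Definition piso {A B : Type} (dA : A -> A -> R) (dB : B -> B -> R) (P : list (A*B)) : Prop :=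
  forall p q, In p P -> In q P -> dB (snd p) (snd q) = dA (fst p) (fst q).

Lemma pairs_to_fun {A B : Type} (dA : A -> A -> R) (dB : B -> B -> R) (b0 : B)
  (HA : forall x, dA x x = 0) (HB : forall x y, dB x y = 0 -> x = y)
  (P : list (A*B)) (HP : piso dA dB P) :
  exists phi : A -> B, forall p, In p P -> phi (fst p) = snd p.
Proof.
  exists (fun x => match excluded_middle_informative (exists p, In p P /\ fst p = x) with
    | left H => snd (proj1_sig (constructive_indefinite_description _ H)) | right _ => b0 end).
  intros p Hp. cbv beta.
  destruct (excluded_middle_informative (exists p0, In p0 P /\ fst p0 = fst p)) as [H|H].
  - destruct (constructive_indefinite_description _ H) as [p' [Hp' Heq]]. simpl.
    apply HB. rewrite (HP p' p Hp' Hp). rewrite Heq. apply HA.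
  - exfalso. apply H. exists p. split; auto.
Qed.

Lemma ext_pairs {U V : Type} (dU : U -> U -> R) (dV : V -> V -> R) (D' : list R) (v0 : V)
  (HU : is_metric U dU) (HUd : forall x y, In (dU x y) D') (HV : in_U D' V dV)
  (P : list (U*V)) (HP : piso dU dV P) (u : U) :
  exists v, forall p, In p P -> dV v (snd p) = dU u (fst p).
Proof.
  destruct HU as [HU1 [HU2 [HU3 HU4]]].
  pose proof (proj1 HV) as [HV1 [HV2 [HV3 HV4]]].
  destruct (pairs_to_fun dU dV v0 (fun x => proj2 (HU2 x x) eq_refl)
              (fun x y H => proj1 (HV2 x y) H) P HP) as [phi Hphi].
  destruct (ext_list dU dV D' v0 HV (map fst P) [u] phi) as [psi [Hpsi1 Hpsi2]].
  - intros a a' Ha Ha'. apply in_map_iff in Ha as [p [<- Hp]].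
    apply in_map_iff in Ha' as [q [<- Hq]].
    rewrite (Hphi p Hp), (Hphi q Hq). apply HP; assumption.
  - intros x y z _ _ _.
    split; [apply HU1|split; [apply HU2|split; [apply HU3|apply HU4]]].
  - intros; apply HUd.
  - exists (psi u). intros p Hp. rewrite <- (Hphi p Hp).
    rewrite <- (Hpsi2 (fst p)) by (apply in_map; assumption).
    apply Hpsi1; apply in_or_app; [right; left; reflexivity | left; apply in_map; assumption].
Qed.

Definition forth {M N : Type} (dM : M -> M -> R) (dN : N -> N -> R) (n0 : N)
  (P : list (M*N)) (x : M) : N :=
  epsilon (inhabits n0) (fun v => forall p, In p P -> dN v (snd p) = dM x (fst p)).

Definition swapP {A B : Type} (P : list (A*B)) : list (B*A) := map (fun p => (snd p, fst p)) P.

Definition pick {M : Type} (m0 : M) (c : M -> nat) (k : nat) : M :=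
  epsilon (inhabits m0) (fun x => c x = k).

Fixpoint chain {M N : Type} (dM : M -> M -> R) (dN : N -> N -> R) (m0 : M) (n0 : N)
  (cM : M -> nat) (cN : N -> nat) (n : nat) : list (M*N) :=
  match n with
  | 0%nat => []
  | S k =>
    let P := chain dM dN m0 n0 cM cN k in
    let x := pick m0 cM k in
    let P1 := (x, forth dM dN n0 P x) :: P in
    let y := pick n0 cN k in
    (forth dN dM m0 (swapP P1) y, y) :: P1
  end.

Lemma pick_spec {M : Type} (m0 : M) (c : M -> nat) (Hc : forall x y, c x = c y -> x = y) (x : M) :
  pick m0 c (c x) = x.
Proof.
  unfold pick. apply Hc. apply (epsilon_spec (inhabits m0) (fun z => c z = c x)).
  exists x; reflexivity.
Qed.

Lemma piso_cons {A B : Type} (dA : A -> A -> R) (dB : B -> B -> R) (P : list (A*B)) (x : A) (v : B)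
  (HA0 : forall a, dA a a = 0) (HB0 : forall b, dB b b = 0)
  (HAs : forall a a', dA a a' = dA a' a) (HBs : forall b b', dB b b' = dB b' b)
  (HP : piso dA dB P) (Hv : forall p, In p P -> dB v (snd p) = dA x (fst p)) :
  piso dA dB ((x, v) :: P).
Proof.
  intros p q [<-|Hp] [<-|Hq]; simpl.
  - rewrite HA0, HB0; reflexivity.
  - apply Hv; exact Hq.
  - rewrite (HAs (fst p) x), (HBs (snd p) v). apply Hv; exact Hp.
  - apply HP; assumption.
Qed.

Lemma piso_swap {A B : Type} (dA : A -> A -> R) (dB : B -> B -> R) (P : list (A*B)) :
  piso dA dB P -> piso dB dA (swapP P).
Proof.
  intros HP p q Hp Hq. unfold swapP in *.
  apply in_map_iff in Hp as [p' [<- Hp]]. apply in_map_iff in Hq as [q' [<- Hq]]. simpl.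
  symmetry. apply HP; assumption.
Qed.

Lemma forth_spec {M N : Type} (dM : M -> M -> R) (dN : N -> N -> R) (D' : list R) (n0 : N)
  (HM : is_metric M dM) (HMd : forall x y, In (dM x y) D') (HN : in_U D' N dN)
  (P : list (M*N)) (HP : piso dM dN P) (x : M) :
  forall p, In p P -> dN (forth dM dN n0 P x) (snd p) = dM x (fst p).
Proof.
  unfold forth.
  apply (epsilon_spec (inhabits n0) (fun v => forall p, In p P -> dN v (snd p) = dM x (fst p))).
  apply (ext_pairs dM dN D' n0 HM HMd HN P HP x).
Qed.

Lemma U_unique (D' : list R) (M : Type) (dM : M -> M -> R) (N : Type) (dN : N -> N -> R)
  (H0 : In 0 D') (HM : in_U D' M dM) (HN : in_U D' N dN) : isometric M dM N dN.
Proof.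
  pose proof HM as HM'. pose proof HN as HN'.
  destruct HM' as [HMm [[cM HcM] [_ [[HMd HMr] _]]]].
  destruct HN' as [HNm [[cN HcN] [_ [[HNd HNr] _]]]].
  destruct (HMr 0 H0) as [m0 _]. destruct (HNr 0 H0) as [n0 _].
  pose proof HMm as [HM1 [HM2 [HM3 HM4]]].
  pose proof HNm as [HN1 [HN2 [HN3 HN4]]].
  assert (HM0 : forall a, dM a a = 0) by (intro a; apply HM2; reflexivity).
  assert (HN0 : forall b, dN b b = 0) by (intro b; apply HN2; reflexivity).
  assert (Hstep : forall P x y, piso dM dN P ->
     piso dM dN ((forth dN dM m0 (swapP ((x, forth dM dN n0 P x)::P)) y, y)
                   :: (x, forth dM dN n0 P x) :: P)).
  { intros P x y HP.
    assert (HP1 : piso dM dN ((x, forth dM dN n0 P x)::P)).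
    { apply piso_cons; auto. apply forth_spec with (D' := D'); auto. }
    apply piso_cons; auto.
    intros p Hp. symmetry.
    assert (Hs : In (snd p, fst p) (swapP ((x, forth dM dN n0 P x)::P))).
    { unfold swapP. apply in_map_iff. exists p. split; [reflexivity|exact Hp]. }
    exact (forth_spec dN dM D' m0 HNm HNd HM _ (piso_swap _ _ _ HP1) y _ Hs). }
  assert (Hpiso : forall n, piso dM dN (chain dM dN m0 n0 cM cN n)).
  { induction n as [|k IH]; [intros p q []|]. simpl. apply Hstep. exact IH. }
  assert (Hmono : forall n m, (n <= m)%nat ->
            incl (chain dM dN m0 n0 cM cN n) (chain dM dN m0 n0 cM cN m)).
  { intros n m Hle. induction Hle; [apply incl_refl|].
    eapply incl_tran; [exact IHHle|]. intros p Hp. simpl. right; right; exact Hp. }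
  assert (Hfst : forall x, In (x, forth dM dN n0 (chain dM dN m0 n0 cM cN (cM x)) x)
                            (chain dM dN m0 n0 cM cN (S (cM x)))).
  { intros x. simpl. rewrite (pick_spec m0 cM HcM x). right; left; reflexivity. }
  assert (Hsnd : forall y, exists x, In (x, y) (chain dM dN m0 n0 cM cN (S (cN y)))).
  { intros y. simpl. rewrite (pick_spec n0 cN HcN y). eexists; left; reflexivity. }
  exists (fun x => forth dM dN n0 (chain dM dN m0 n0 cM cN (cM x)) x).
  split.
  - intros x x'.
    assert (H1 := Hmono (S (cM x)) (S (Nat.max (cM x) (cM x'))) ltac:(lia) _ (Hfst x)).
    assert (H2 := Hmono (S (cM x')) (S (Nat.max (cM x) (cM x'))) ltac:(lia) _ (Hfst x')).
    exact (Hpiso _ _ _ H1 H2).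
  - intros y. destruct (Hsnd y) as [x Hx]. exists x.
    apply HN2.
    assert (H1 := Hmono (S (cM x)) (S (Nat.max (cM x) (cN y))) ltac:(lia) _ (Hfst x)).
    assert (H2 := Hmono (S (cN y)) (S (Nat.max (cM x) (cN y))) ltac:(lia) _ Hx).
    pose proof (Hpiso _ _ _ H1 H2) as E; simpl in E; rewrite E; apply HM0.
Qed.

Lemma rank_spec {M : Type} (F : list M) (t : M -> R) : F <> nil ->
  (forall x, In x F -> rank M F t <= t x) /\ exists x, In x F /\ rank M F t = t x.
Proof.
  destruct F as [|a xs]; [intro Hc; contradiction|intros _].
  unfold rank.
  induction xs as [|b xs IH].
  - simpl. split.
    + intros x [<-|[]]; lra.
    + exists a; auto.
  - destruct IH as [IH1 [w [Hw Hrw]]].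
    change (fold_right (fun y acc => Rmin (t y) acc) (t a) (b :: xs)) with
      (Rmin (t b) (fold_right (fun y acc => Rmin (t y) acc) (t a) xs)).
    set (r := fold_right (fun y acc => Rmin (t y) acc) (t a) xs) in *.
    split.
    + intros x [<-|[<-|Hx]].
      * eapply Rle_trans; [apply Rmin_r|]. apply IH1; left; reflexivity.
      * apply Rmin_l.
      * eapply Rle_trans; [apply Rmin_r|]. apply IH1; right; exact Hx.
    + destruct (Rle_dec (t b) r) as [Hle|Hgt].
      * exists b. split; [right; left; reflexivity|]. apply Rmin_left; exact Hle.
      * exists w. split.
        { destruct Hw as [<-|Hw]; [left; reflexivity|right; right; exact Hw]. }
        rewrite Rmin_right by lra. exact Hrw.
Qed.

Lemma abs_bound (a b : R) : Rabs a <= b -> a <= b /\ -a <= b.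
Proof.
  intros H. split.
  - eapply Rle_trans; [apply Rle_abs|exact H].
  - eapply Rle_trans; [|exact H]. rewrite <- Rabs_Ropp. apply Rle_abs.
Qed.

Lemma NoDup_map_inj {A B : Type} (f : A -> B) (l : list A) :
  NoDup l -> (forall x y, In x l -> In y l -> f x = f y -> x = y) -> NoDup (map f l).
Proof.
  induction 1 as [|a l Ha Hl IH]; intros Hinj; simpl.
  - constructor.
  - constructor.
    + intro Hin. apply in_map_iff in Hin as [b [Hb Hbl]]. apply Ha.
      rewrite <- (Hinj b a (or_intror Hbl) (or_introl eq_refl) Hb). exact Hbl.
    + apply IH. intros x y Hx Hy. apply Hinj; right; auto.
Qed.

Definition ddsum {G H : Type} (dG : G -> G -> R) (d : H -> H -> R) (t : H -> R)
  (a b : G + H) : R :=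
  match a, b with
  | inl g, inl g' => dG g g'
  | inr x, inr y => d x y
  | inl _, inr y => t y
  | inr x, inl _ => t x
  end.

Theorem theorem2p2 (D : list R)
  (HD0 : In 0 D) (HDpos : forall r, In r D -> 0 <= r)
  (HDu : universal D)
  (H : Type) (d : H -> H -> R) (HH : in_U D H d)
  (F : list H) (t : H -> R) (HF : F <> nil) (Ht : katetov D H d F t) :
  let Dt := D_restrict D (rank H F t) in
  let O := { y : H | orb H d F t y } in
  let dO := fun a b : O => d (proj1_sig a) (proj1_sig b) in
  universal Dt /\
  (forall (U : Type) (dU : U -> U -> R), in_U Dt U dU -> isometric O dO U dU) /\
  ~ (exists l : list H, forall y, orb H d F t y -> In y l).
Proof.
  intros Dt Ot dO.
  pose proof HH as HH'.
  destruct HH as [[Hm1 [Hm2 [Hm3 Hm4]]] [[cH HcH] [Hhom [[Hdist Hreal] Huniv]]]].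
  destruct Ht as [Ht1 Ht2].
  destruct (rank_spec F t HF) as [Hrk [x0 [Hx0 Hrx0]]].
  assert (HM0 : forall a, d a a = 0) by (intro a; apply Hm2; reflexivity).
  assert (Htpos : forall x, In x F -> 0 < t x).
  { intros x Hx. destruct (Ht1 x Hx) as [HtD Ht0].
    destruct (HDpos _ HtD) as [Hlt|Heq]; [exact Hlt | exfalso; apply Ht0; symmetry; exact Heq]. }
  assert (Kat : forall x y, In x F -> In y F ->
            t x - t y <= d x y /\ -(t x - t y) <= d x y /\ d x y <= t x + t y).
  { intros x y Hx Hy. destruct (Ht2 x y Hx Hy) as [A B].
    destruct (abs_bound _ _ A). auto. }
  assert (HDt : forall n, In n Dt <-> In n D /\ n <= 2 * rank H F t).
  { intro n. unfold Dt, D_restrict. split; intro Hn.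
    - apply filter_In in Hn as [Hn1 Hn2]. split; [exact Hn1|].
      destruct (Rle_dec n (2 * rank H F t)); [assumption|discriminate].
    - apply filter_In. split; [apply Hn|].
      destruct (Rle_dec n (2 * rank H F t)); [reflexivity|exfalso; apply n0; apply Hn]. }
  assert (Hrpos : 0 < rank H F t) by (rewrite Hrx0; apply Htpos; exact Hx0).
  assert (H0t : In 0 Dt) by (apply HDt; split; [exact HD0|lra]).
  assert (Hrt : In (rank H F t) Dt).
  { apply HDt; split; [rewrite Hrx0; apply (Ht1 x0 Hx0)|lra]. }
  assert (Horb_d : forall y z, orb H d F t y -> orb H d F t z -> d y z <= 2 * rank H F t).
  { intros y z [_ Hy] [_ Hz]. pose proof (Hm4 y x0 z) as Htri.
    rewrite (Hy x0 Hx0), (Hm3 x0 z), (Hz x0 Hx0) in Htri. lra. }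
  assert (HmO : is_metric Ot dO).
  { split; [|split; [|split]].
    - intros a b; apply Hm1.
    - intros a b; split; intro Hab.
      + apply sig_ext; apply Hm2; exact Hab.
      + subst b; apply Hm2; reflexivity.
    - intros a b; apply Hm3.
    - intros a b c; apply Hm4. }
  assert (HcO : countable Ot).
  { exists (fun s => cH (proj1_sig s)). intros a b Hab. apply sig_ext, HcH, Hab. }
  assert (HuO : D_universal_space Dt Ot dO).
  { intros G dG HG [lG HlG] HGd.
    destruct HG as [HG1 [HG2 [HG3 HG4]]].
    assert (HdG2 : forall g g' x, In x F -> dG g g' <= 2 * t x).
    { intros g g' x Hx. pose proof (proj1 (HDt _) (HGd g g')) as [_ Hq]. pose proof (Hrk x Hx). lra. }
    assert (HinF : forall x, In (inr x) (map (@inr G H) F ++ map (@inl G H) lG) -> In x F).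
    { intros x Hx. apply in_app_or in Hx as [Hx|Hx]; apply in_map_iff in Hx as [y [Hy Hy']].
      - injection Hy as <-. exact Hy'.
      - discriminate Hy. }
    set (L := map (@inr G H) F ++ map (@inl G H) lG) in *.
    assert (Hnn : forall a b, In a L -> In b L -> 0 <= ddsum dG d t a b).
    { intros [g|x] [g'|y] Ha Hb; simpl.
      - apply HG1.
      - apply HinF in Hb. pose proof (Htpos y Hb). lra.
      - apply HinF in Ha. pose proof (Htpos x Ha). lra.
      - apply Hm1. }
    assert (Hz : forall a b, In a L -> In b L -> ddsum dG d t a b = 0 <-> a = b).
    { intros [g|x] [g'|y] Ha Hb; simpl.
      - split; intro E; [f_equal; apply HG2; exact E | injection E as E; subst; apply HG2; reflexivity].
      - apply HinF in Hb. pose proof (Htpos y Hb). split; intro E; [exfalso; lra|discriminate E].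
      - apply HinF in Ha. pose proof (Htpos x Ha). split; intro E; [exfalso; lra|discriminate E].
      - split; intro E; [f_equal; apply Hm2; exact E | injection E as E; subst; apply Hm2; reflexivity]. }
    assert (Hs : forall a b, ddsum dG d t a b = ddsum dG d t b a).
    { intros [g|x] [g'|y]; simpl; [apply HG3|reflexivity|reflexivity|apply Hm3]. }
    assert (Htr : forall a b c, In a L -> In b L -> In c L ->
               ddsum dG d t a c <= ddsum dG d t a b + ddsum dG d t b c).
    { intros [g1|x1] [g2|x2] [g3|x3] Ha Hb Hc; simpl;
      repeat match goal with Hq : In (inr _) _ |- _ => apply HinF in Hq end.
      - apply HG4.
      - pose proof (HG1 g1 g2). lra.
      - pose proof (HdG2 g1 g3 x2 Hb). lra.
      - destruct (Kat x2 x3 Hb Hc) as [K1 [K2 K3]]. lra.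
      - pose proof (HG1 g2 g3). lra.
      - destruct (Kat x1 x3 Ha Hc) as [K1 [K2 K3]]. lra.
      - destruct (Kat x1 x2 Ha Hb) as [K1 [K2 K3]]. lra.
      - apply Hm4. }
    assert (Hmet : metric_on (ddsum dG d t) L).
    { intros a b c Ha Hb Hc.
      split; [apply Hnn; auto| split; [apply Hz; auto | split; [apply Hs| apply Htr; auto]]]. }
    assert (Hdd : forall a b, In a L -> In b L -> In (ddsum dG d t a b) D).
    { intros [g|x] [g'|y] Ha Hb; simpl.
      - apply (proj1 (HDt _) (HGd g g')).
      - apply HinF in Hb. apply (Ht1 y Hb).
      - apply HinF in Ha. apply (Ht1 x Ha).
      - apply Hdist. }
    pose (phi := fun z : G + H => match z with inr x => x | inl _ => x0 end).
    destruct (ext_list (ddsum dG d t) d D x0 HH' (map (@inr G H) F) (map (@inl G H) lG) phi)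
      as [psi [Hpsi1 Hpsi2]].
    - intros a a' Ha Ha'. apply in_map_iff in Ha as [x [<- _]].
      apply in_map_iff in Ha' as [y [<- _]]. reflexivity.
    - exact Hmet.
    - exact Hdd.
    - assert (Hin_l : forall g, In (inl g) L)
        by (intro g; apply in_or_app; right; apply in_map; apply HlG).
      assert (Hin_r : forall x, In x F -> In (inr x) L)
        by (intros x Hx; apply in_or_app; left; apply in_map; exact Hx).
      assert (Hpr : forall x, In x F -> psi (inr x) = x).
      { intros x Hx. rewrite Hpsi2 by (apply in_map; exact Hx). reflexivity. }
      assert (Horb : forall g, orb H d F t (psi (inl g))).
      { intro g.
        assert (Hd' : forall x, In x F -> d (psi (inl g)) x = t x).
        { intros x Hx. transitivity (d (psi (inl g)) (psi (inr x))).
          - rewrite (Hpr x Hx). reflexivity.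
          - rewrite Hpsi1 by auto. reflexivity. }
        split; [|exact Hd'].
        intro Hin. pose proof (Hd' _ Hin) as E. rewrite HM0 in E.
        pose proof (Htpos _ Hin). lra. }
      exists (fun g => exist _ (psi (inl g)) (Horb g)).
      intros g g'. change (d (psi (inl g)) (psi (inl g')) = dG g g').
      rewrite Hpsi1 by auto. reflexivity. }
  assert (HhO : homogeneous Ot dO).
  { intros A g Hg.
    pose (g' := fun y : H => match excluded_middle_informative (orb H d F t y) with
       | left p => proj1_sig (g (exist _ y p)) | right _ => y end).
    assert (Hg'F : forall x, In x F -> g' x = x).
    { intros x Hx. unfold g'.
      destruct (excluded_middle_informative (orb H d F t x)) as [p|_];
        [exfalso; destruct p as [Hn _]; contradiction|reflexivity]. }
    assert (Hg'O : forall s : Ot, g' (proj1_sig s) = proj1_sig (g s)).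
    { intros [y py]. unfold g'. simpl.
      destruct (excluded_middle_informative (orb H d F t y)) as [p|n]; [|contradiction].
      rewrite (proof_irrelevance _ p py). reflexivity. }
    destruct (Hhom (F ++ map (@proj1_sig _ _) A) g') as [h [Hh1 [Hh2 Hh3]]].
    { intros a b Ha Hb. apply in_app_or in Ha; apply in_app_or in Hb.
      destruct Ha as [Ha|Ha]; destruct Hb as [Hb|Hb].
      - rewrite (Hg'F a Ha), (Hg'F b Hb). reflexivity.
      - apply in_map_iff in Hb as [s [<- Hs]]. rewrite (Hg'F a Ha), (Hg'O s).
        destruct (proj2_sig (g s)) as [_ H1]. destruct (proj2_sig s) as [_ H2].
        rewrite (Hm3 a (proj1_sig (g s))), (Hm3 a (proj1_sig s)), (H1 a Ha), (H2 a Ha).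
        reflexivity.
      - apply in_map_iff in Ha as [s [<- Hs]]. rewrite (Hg'F b Hb), (Hg'O s).
        destruct (proj2_sig (g s)) as [_ H1]. destruct (proj2_sig s) as [_ H2].
        rewrite (H1 b Hb), (H2 b Hb). reflexivity.
      - apply in_map_iff in Ha as [s [<- Hs]]. apply in_map_iff in Hb as [s' [<- Hs']].
        rewrite (Hg'O s), (Hg'O s'). exact (Hg s s' Hs Hs'). }
    assert (HhF : forall x, In x F -> h x = x).
    { intros x Hx. rewrite Hh3 by (apply in_or_app; left; exact Hx). apply Hg'F; exact Hx. }
    assert (Horb_h : forall y, orb H d F t y -> orb H d F t (h y)).
    { intros y [Hny Hy].
      assert (Hd' : forall x, In x F -> d (h y) x = t x).
      { intros x Hx. transitivity (d (h y) (h x)); [rewrite (HhF x Hx); reflexivity|].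
        rewrite Hh1. apply Hy; exact Hx. }
      split; [|exact Hd'].
      intro Hin. pose proof (Hd' _ Hin) as E. rewrite HM0 in E.
      pose proof (Htpos _ Hin). lra. }
    exists (fun s : Ot => exist _ (h (proj1_sig s)) (Horb_h _ (proj2_sig s))).
    split; [|split].
    - intros a b. exact (Hh1 _ _).
    - intros s. destruct (Hh2 (proj1_sig s)) as [x Hx].
      assert (Hox : orb H d F t x).
      { split.
        - intro HxF. rewrite (HhF x HxF) in Hx. destruct (proj2_sig s) as [Hn _].
          apply Hn. rewrite <- Hx. exact HxF.
        - intros z Hz. rewrite <- (Hh1 x z). rewrite (HhF z Hz), Hx.
          destruct (proj2_sig s) as [_ Hs]. apply Hs; auto. }
      exists (exist _ x Hox). apply sig_ext. simpl. exact Hx.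
    - intros s Hs. apply sig_ext. simpl. rewrite Hh3.
      + apply Hg'O.
      + apply in_or_app; right; apply in_map; exact Hs. }
  assert (HdO : distance_set_eq Dt Ot dO).
  { split.
    - intros [y py] [z pz]. apply HDt. split; [apply Hdist|]. simpl. apply Horb_d; auto.
    - intros n Hn. apply HDt in Hn as [HnD Hnr].
      destruct (Req_dec n 0) as [->|Hn0].
      + destruct (HuO unit (fun _ _ => 0)) as [f _].
        * split; [|split; [|split]].
          -- intros; lra.
          -- intros [] []; split; reflexivity.
          -- intros; reflexivity.
          -- intros; lra.
        * exists [tt]; intros []; left; reflexivity.
        * intros; exact H0t.
        * exists (f tt), (f tt). apply HM0.
      + assert (Hnpos : 0 < n).
        { destruct (HDpos n HnD) as [Hlt|Heq]; [exact Hlt|exfalso; apply Hn0; symmetry; exact Heq]. }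
        pose (dB := fun b b' : bool => if Bool.eqb b b' then 0 else n).
        assert (HB : is_metric bool dB).
        { unfold is_metric, dB; split; [|split; [|split]].
          - intros [] []; simpl; lra.
          - intros [] []; simpl; split; intro Hx;
              first [reflexivity | discriminate | (exfalso; lra)].
          - intros [] []; reflexivity.
          - intros [] [] []; simpl; lra. }
        destruct (HuO bool dB HB) as [f Hf].
        * exists [true; false]. intros []; simpl; auto.
        * intros [] []; unfold dB; simpl; first [exact H0t | apply HDt; split; assumption].
        * exists (f true), (f false). rewrite Hf. reflexivity. }
  assert (HinO : in_U Dt Ot dO) by (split; [exact HmO | split; [exact HcO | split; [exact HhO | split; [exact HdO | exact HuO]]]]).
  split; [exists Ot, dO; exact HinO|].
  split.
  - intros U dU HU. apply (U_unique Dt); assumption.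
  - intros [l Hl].
    destruct (proj2 HdO 0 H0t) as [o0 _].
    destruct (univ_list (fun i j : nat => if Nat.eq_dec i j then 0 else rank H F t) dO Dt o0 HuO
                (seq 0 (S (length l)))) as [f Hf].
    + intros i j k _ _ _. cbv beta.
      split; [|split; [|split]].
      * destruct (Nat.eq_dec i j); lra.
      * destruct (Nat.eq_dec i j) as [e|ne]; split; intro E;
          first [exact e | reflexivity | contradiction | (exfalso; lra)].
      * destruct (Nat.eq_dec i j), (Nat.eq_dec j i); subst; try reflexivity; congruence.
      * destruct (Nat.eq_dec i k), (Nat.eq_dec i j), (Nat.eq_dec j k); subst; try lra; congruence.
    + intros i j _ _. destruct (Nat.eq_dec i j); [exact H0t | exact Hrt].
    + set (L' := map (fun i => proj1_sig (f i)) (seq 0 (S (length l)))).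
      assert (HND : NoDup L').
      { apply NoDup_map_inj; [apply seq_NoDup|].
        intros i j Hi Hj E. cbv beta in E.
        destruct (Nat.eq_dec i j) as [e|ne]; [exact e|exfalso].
        pose proof (Hf i j Hi Hj) as Hfij. cbv beta in Hfij.
        assert (Eif : (if Nat.eq_dec i j then 0 else rank H F t) = rank H F t)
          by (destruct (Nat.eq_dec i j); [contradiction|reflexivity]).
        rewrite Eif in Hfij.
        change (d (proj1_sig (f i)) (proj1_sig (f j)) = rank H F t) in Hfij.
        rewrite E, HM0 in Hfij. lra. }
      assert (Hincl : incl L' l).
      { intros z Hz. apply in_map_iff in Hz as [i [<- _]]. apply Hl. exact (proj2_sig (f i)). }
      pose proof (NoDup_incl_length HND Hincl) as Hlen.
      unfold L' in Hlen. rewrite length_map, length_seq in Hlen. lia.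
Qed.
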